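(* For all integers $n\ge1$: (1) $\sum_{k=1}^{n}(F_{k+1}+F_{k-1})F_k^3=F_n^2F_{n+1}^2$; (2) $\sum_{k=1}^{n}(P_{k+1}+P_{k-1})P_k^3=\frac12P_n^2P_{n+1}^2$; (3) $\sum_{k=1}^{n}4^{n-k}(J_{k+1}+2J_{k-1})J_k^3=J_n^2J_{n+1}^2$; (4) $\sum_{k=1}^{n}4^{n-k}(2^k+1)(2^k-1)^3=\frac13(2^n-1)^2(2^{n+1}-1)^2$; (5) for $q\neq1$, $\sum_{k=1}^{n}q^{2(n-k)}\left(\frac{1-q^{2k}}{1-q^2}\right)\left(\frac{1-q^k}{1-q}\right)^2=\left[{n+1\atop 2}\right]_q^2$.
   Context: $F_n$ are the Fibonacci numbers ($F_0=0,F_1=1,F_{n+2}=F_{n+1}+F_n$); $P_n$ the Pell numbers ($P_0=0,P_1=1,P_{n+2}=2P_{n+1}+P_n$); $J_n$ the Jacobsthal numbers ($J_0=0,J_1=1,J_{n+2}=J_{n+1}+2J_n$). $\left[{n+1\atop 2}\right]_q=\frac{(1-q^{n})(1-q^{n+1})}{(1-q)(1-q^2)}$ is the Gaussian binomial coefficient. *)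

(* Defs.v *)
From mathcomp Require Import all_boot all_order all_algebra.
Set Implicit Arguments. Unset Strict Implicit. Unset Printing Implicit Defensive.
Import Order.TTheory GRing.Theory Num.Theory.

Fixpoint fib (n : nat) : nat :=
  match n with
  | 0 => 0
  | 1 => 1
  | (m.+1 as p).+1 => fib p + fib m
  end.

Fixpoint pell (n : nat) : nat :=
  match n with
  | 0 => 0
  | 1 => 1
  | (m.+1 as p).+1 => 2 * pell p + pell m
  end.

Fixpoint jacobsthal (n : nat) : nat :=
  match n with
  | 0 => 0
  | 1 => 1
  | (m.+1 as p).+1 => jacobsthal p + 2 * jacobsthal m
  end.

Local Open Scope ring_scope.

(* Gaussian binomial [n+1 choose 2]_q = (1-q^n)(1-q^{n+1}) / ((1-q)(1-q^2)) *)
Definition gauss_binom2 (R : fieldType) (q : R) (n : nat) : R :=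
  ((1 - q ^+ n) * (1 - q ^+ n.+1)) / ((1 - q) * (1 - q ^+ 2)).

(* Main.v *)
Require Import Defs.
From mathcomp Require Import all_boot all_order all_algebra.
From mathcomp Require Import ring.
Import Order.TTheory GRing.Theory Num.Theory.
Local Open Scope ring_scope.

Lemma wsum_rec (R : comPzRingType) (c : R) (f : nat -> R) (n : nat) :
  \sum_(1 <= k < n.+2) c ^+ (n.+1 - k) * f k =
  c * \sum_(1 <= k < n.+1) c ^+ (n - k) * f k + f n.+1.
Proof.
rewrite big_nat_recr //= subnn expr0 mul1r; congr (_ + _).
rewrite mulr_sumr; apply: eq_big_nat => k /andP [_ Hk].
by rewrite subSn // exprS mulrA.
Qed.

Lemma wsum_rec' (R : comPzRingType) (c : R) (f : nat -> R) (n : nat) :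
  \sum_(1 <= k < n.+2) c ^+ (n.+1 - k) * f k =
  c * \sum_(1 <= k < n.+1) c ^+ (n - k) * f k + f n.+1.
Proof. exact: wsum_rec. Qed.

Lemma p1 n : \sum_(1 <= k < n.+2) (((fib k.+1 + fib k.-1)%:R : rat) * (fib k)%:R ^+ 3)
        = (fib n.+1)%:R ^+ 2 * (fib n.+2)%:R ^+ 2.
Proof.
elim: n => [|n IH]; first by rewrite big_nat1.
rewrite big_nat_recr // IH /=.
rewrite !natrD; ring.
Qed.

Lemma p2 n : \sum_(1 <= k < n.+2) (((pell k.+1 + pell k.-1)%:R : rat) * (pell k)%:R ^+ 3)
        = 2^-1 * (pell n.+1)%:R ^+ 2 * (pell n.+2)%:R ^+ 2.
Proof.
elim: n => [|n IH].
  by rewrite big_nat1 /=; rewrite !(natrD, natrM); field; done.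
rewrite big_nat_recr // IH /=.
rewrite !(natrD, natrM); field; done.
Qed.

Lemma p3 n : \sum_(1 <= k < n.+2) ((4 : rat) ^+ (n.+1 - k)
            * (jacobsthal k.+1 + 2 * jacobsthal k.-1)%:R * (jacobsthal k)%:R ^+ 3)
        = (jacobsthal n.+1)%:R ^+ 2 * (jacobsthal n.+2)%:R ^+ 2.
Proof.
elim: n => [|n IH]; first by rewrite big_nat1.
under eq_bigr do rewrite -mulrA.
rewrite wsum_rec.
under eq_bigr do rewrite mulrA.
rewrite IH /=.
rewrite !(natrD, natrM); ring.
Qed.

Lemma p4 n : \sum_(1 <= k < n.+2) ((4 : rat) ^+ (n.+1 - k) * (2 ^+ k + 1) * (2 ^+ k - 1) ^+ 3)
        = 3^-1 * (2 ^+ n.+1 - 1) ^+ 2 * (2 ^+ n.+2 - 1) ^+ 2.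
Proof.
elim: n => [|n IH].
  by rewrite big_nat1; rewrite !expr2 /=; field; done.
under eq_bigr do rewrite -mulrA.
rewrite wsum_rec.
under eq_bigr do rewrite mulrA.
rewrite IH.
rewrite (exprS _ n.+2) (exprS _ n.+1).
set x := (2 : rat) ^+ n.+1.
field; done.
Qed.

Lemma p5 (R : fieldType) (q : R) n : q != 1 ->
      \sum_(1 <= k < n.+2) (q ^+ (2 * (n.+1 - k))
            * ((1 - q ^+ (2 * k)) / (1 - q ^+ 2)) * ((1 - q ^+ k) / (1 - q)) ^+ 2)
        = gauss_binom2 q n.+1 ^+ 2.
Proof.
move=> hq.
have hq1 : 1 - q != 0 by rewrite subr_eq0 eq_sym.
have [h2|h2] := eqVneq (1 - q ^+ 2) 0.
  rewrite /gauss_binom2 h2 !mulr0 invr0 mulr0 expr0n /=.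
  by rewrite big1 // => k _; rewrite ?invr0 !mulr0 ?mul0r.
elim: n => [|n IH].
  rewrite big_nat1 /gauss_binom2 subnn muln0 expr0 mul1r muln1.
  by field; rewrite h2 hq1.
under eq_bigr do rewrite -mulrA.
rewrite (eq_bigr (fun k => (q ^+ 2) ^+ (n.+2 - k) *
   ((1 - q ^+ (2 * k)) / (1 - q ^+ 2) * ((1 - q ^+ k) / (1 - q)) ^+ 2))); last first.
  by move=> k _; rewrite exprM.
rewrite wsum_rec.
rewrite (eq_bigr (fun k => q ^+ (2 * (n.+1 - k)) *
   ((1 - q ^+ (2 * k)) / (1 - q ^+ 2)) * ((1 - q ^+ k) / (1 - q)) ^+ 2)); last first.
  by move=> k _; rewrite -exprM mulrA.
rewrite IH /gauss_binom2.
rewrite mulnC exprM.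
rewrite (exprS q n.+2) (exprS q n.+1).
set a := q ^+ n.+1.
field; rewrite h2 hq1 //.
Qed.

Theorem mainTheorem14 (n : nat) : (1 <= n)%N ->
  [/\ \sum_(1 <= k < n.+1) (((fib k.+1 + fib k.-1)%:R : rat) * (fib k)%:R ^+ 3)
        = (fib n)%:R ^+ 2 * (fib n.+1)%:R ^+ 2,
      \sum_(1 <= k < n.+1) (((pell k.+1 + pell k.-1)%:R : rat) * (pell k)%:R ^+ 3)
        = 2^-1 * (pell n)%:R ^+ 2 * (pell n.+1)%:R ^+ 2,
      \sum_(1 <= k < n.+1) ((4 : rat) ^+ (n - k)
            * (jacobsthal k.+1 + 2 * jacobsthal k.-1)%:R * (jacobsthal k)%:R ^+ 3)
        = (jacobsthal n)%:R ^+ 2 * (jacobsthal n.+1)%:R ^+ 2,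
      \sum_(1 <= k < n.+1) ((4 : rat) ^+ (n - k) * (2 ^+ k + 1) * (2 ^+ k - 1) ^+ 3)
        = 3^-1 * (2 ^+ n - 1) ^+ 2 * (2 ^+ n.+1 - 1) ^+ 2
    & forall (R : fieldType) (q : R), q != 1 ->
      \sum_(1 <= k < n.+1) (q ^+ (2 * (n - k))
            * ((1 - q ^+ (2 * k)) / (1 - q ^+ 2)) * ((1 - q ^+ k) / (1 - q)) ^+ 2)
        = gauss_binom2 q n ^+ 2].
Proof.
case: n => [//|n] _.
split; [exact: p1 | exact: p2 | exact: p3 | exact: p4 | move=> R q; exact: p5].
Qed.
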